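(* Let $p\ge 2$ be an integer and let $G$ be a finite simple $[p+2,p]$-graph of order $n$ with minimum degree $\delta(G)\ge p$ and $n\ge 2p+3$. Then $G$ is triangle-free if and only if $p$ is even, $p\ge 6$, and $G$ is isomorphic to $C_5^{(p/2)}$.
   Context: For integers $s,t$, a graph $G$ is called an $[s,t]$-graph if every induced subgraph of $G$ on $s$ vertices has at least $t$ edges. For a graph $H$ and a positive integer $k$, the $k$-blow-up $H^{(k)}$ is the graph obtained by replacing each vertex of $H$ by $k$ distinct vertices, where a copy of $u$ is adjacent to a copy of $v$ if and only if $uv$ is an edge of $H$ (in particular copies of the same vertex are pairwise nonadjacent). $C_5$ denotes the cycle on $5$ vertices. *)

(* Defs.v *)
From mathcomp Require Import all_boot.
Set Implicit Arguments. Unset Strict Implicit. Unset Printing Implicit Defensive.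

Definition simple_graph (T : finType) (e : rel T) : Prop :=
  irreflexive e /\ symmetric e.

Definition edges_in (T : finType) (e : rel T) (S : {set T}) : nat :=
  #|[set U in powerset S | [exists x, exists y, (U == [set x; y]) && e x y]]|.

Definition st_graph (T : finType) (e : rel T) (s t : nat) : Prop :=
  forall S : {set T}, #|S| = s -> t <= edges_in e S.

Definition deg (T : finType) (e : rel T) (x : T) : nat := #|[set y | e x y]|.

Definition min_degree_ge (T : finType) (e : rel T) (d : nat) : Prop :=
  forall x : T, d <= deg e x.

Definition triangle_free (T : finType) (e : rel T) : Prop :=
  forall x y z : T, ~ [&& e x y, e y z & e x z].

Definition C5 : rel 'I_5 :=
  fun i j => ((i.+1 %% 5 == j) || (j.+1 %% 5 == i)).

Definition blowup (V : finType) (h : rel V) (k : nat) : rel (V * 'I_k) :=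
  fun u v => h u.1 v.1.

Definition isomorphic (T U : finType) (e : rel T) (h : rel U) : Prop :=
  exists f : T -> U, bijective f /\ forall x y, e x y = h (f x) (f y).
Arguments blowup {V} h k.

(* Main.v *)
Require Import Defs.
From mathcomp Require Import all_boot zify.

Lemma sub_card {T : finType} (A : {set T}) k :
  k <= #|A| -> exists2 B : {set T}, B \subset A & #|B| = k.
Proof.
move: {2}#|A| (erefl #|A|) => n; elim: n A => [|n IH] A cA hk.
  by exists A => //; lia.
case: (ltnP k n.+1) => hk'.
  have : 0 < #|A| by lia.
  case/card_gt0P => a aA.
  have cA' : #|A :\ a| = n by move: cA; rewrite (cardsD1 a A) aA; lia.
  have [B sB cB] := IH _ cA' (ltac:(lia)).
  exists B => //; apply: subset_trans sB _; exact: subD1set.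
by exists A => //; lia.
Qed.

Lemma solve5 s0 s1 s2 s3 s4 k : s1 + s4 = k + k -> s0 + s2 = k + k ->
  s1 + s3 = k + k -> s2 + s4 = k + k -> s0 + s3 = k + k ->
  [/\ s0 = k, s1 = k, s2 = k, s3 = k & s4 = k].
Proof. by move=> *; split; lia. Qed.

Lemma C5tf (i j l : 'I_5) : ~~ [&& C5 i j, C5 j l & C5 i l].
Proof.
case: i => [[|[|[|[|[|i]]]]] Hi] //; case: j => [[|[|[|[|[|j]]]]] Hj] //;
  case: l => [[|[|[|[|[|l]]]]] Hl] //.
Qed.

Section G.
Variables (T : finType) (e : rel T) (p : nat).
Hypotheses (irr : irreflexive e) (sym : symmetric e)
  (st : st_graph e (p + 2) p) (md : min_degree_ge e p)
  (nT : 2 * p + 3 <= #|T|) (tf : triangle_free e) (p2 : 2 <= p).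

Notation N x := [set y | e x y].
Definition indep (I : {set T}) := forall a b, a \in I -> b \in I -> ~~ e a b.

Lemma tri {x y z} : e x y -> e y z -> e x z -> False.
Proof. by move=> h1 h2 h3; apply: (tf x y z); rewrite h1 h2 h3. Qed.

Lemma edges0 I : indep I -> edges_in e I = 0.
Proof.
move=> iI; apply/eqP; rewrite cards_eq0; apply/eqP/setP => U; rewrite !inE.
apply/negP => /andP [/subsetP sU /existsP [a /existsP [b /andP [/eqP UE eab]]]].
have aI : a \in I by apply: sU; rewrite UE !inE eqxx.
have bI : b \in I by apply: sU; rewrite UE !inE eqxx orbT.
by move: (iI a b aI bI); rewrite eab.
Qed.

Lemma P2 {I x y} : indep I ->
  edges_in e (x |: (y |: I)) <= #|N x :&: (x |: (y |: I))| + #|N y :&: I|.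
Proof.
move=> iI; set S := x |: (y |: I).
apply: leq_trans (leq_trans _ (leq_card_setU
   ((fun w => [set x; w]) @: (N x :&: S)) ((fun w => [set y; w]) @: (N y :&: I))))
   (leq_add (leq_imset_card _ _) (leq_imset_card _ _)).
apply: subset_leq_card; apply/subsetP => U; rewrite !inE.
case/andP => /subsetP sU /existsP [a /existsP [b /andP [/eqP UE eab]]].
have aS : a \in S by apply: sU; rewrite UE !inE eqxx.
have bS : b \in S by apply: sU; rewrite UE !inE eqxx orbT.
case: (eqVneq a x) => [ax|nax].
  apply/orP; left; apply/imsetP; exists b; [by rewrite in_setI bS inE -ax eab | by rewrite UE ax].
case: (eqVneq b x) => [bx|nbx].
  apply/orP; left; apply/imsetP; exists a; last by rewrite UE bx setUC.
  by rewrite in_setI aS inE -bx sym eab.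
move: aS bS; rewrite /S !inE (negbTE nax) (negbTE nbx) /=.
case: (eqVneq a y) => [ay|nay] /= aI.
  move=> bI; apply/orP; right; apply/imsetP; exists b; last by rewrite UE ay.
  rewrite !inE -ay eab /=; case/orP: bI => // /eqP by_.
  by move: eab; rewrite ay by_ irr.
case: (eqVneq b y) => [bY|nby] /= bI.
  apply/orP; right; apply/imsetP; exists a; last by rewrite UE bY setUC.
  by rewrite !inE -bY sym eab aI.
by move: (iI a b aI bI); rewrite eab.
Qed.


Lemma indep_sub {I J : {set T}} : indep I -> J \subset I -> indep J.
Proof. by move=> iI /subsetP sJ a b aJ bJ; apply: iI; apply: sJ. Qed.

Lemma no_indep_p2 {I : {set T}} : indep I -> #|I| = p + 2 -> False.
Proof. by move=> iI cI; have := st _ cI; rewrite edges0 //; lia. Qed.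

Lemma alpha {I : {set T}} : indep I -> #|I| <= p.
Proof.
move=> iI; rewrite leqNgt; apply/negP => H.
have [J sJ cJ] := sub_card _ _ H; have iJ := indep_sub iI sJ.
have degJ : forall z, z \notin J -> p <= #|N z :&: J|.
  move=> z zJ.
  have : 0 < #|J| by lia.
  case/card_gt0P => y yJ.
  have cS : #|z |: J| = p + 2 by rewrite cardsU1 zJ cJ; lia.
  have := st _ cS; rewrite -{1}(setD1K yJ) => h.
  have := leq_trans h (P2 (x:=z) (y:=y) (indep_sub iJ (subD1set J y))).
  have -> : N y :&: (J :\ y) = set0.
    apply/setP => w; rewrite !inE; apply/negP => /and3P [eyw _ wJ].
    by move: (iJ y w yJ wJ); rewrite eyw.
  rewrite cards0 addn0 setD1K // => h2; apply: leq_trans h2 _.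
  apply: subset_leq_card; apply/subsetP => w; rewrite !inE.
  case/andP => ezw /orP [/eqP wz|->]; last by rewrite ezw.
  by move: ezw; rewrite wz irr.
have iW : indep (~: J).
  move=> a b; rewrite !inE => aJ bJ; apply/negP => eab.
  have := cardsUI (N a :&: J) (N b :&: J).
  have : #|(N a :&: J) :|: (N b :&: J)| <= #|J|.
    by apply: subset_leq_card; rewrite -setIUl subsetIr.
  have := degJ a aJ; have := degJ b bJ.
  move=> h1 h2 h3 h4.
  have : 0 < #|(N a :&: J) :&: (N b :&: J)| by lia.
  case/card_gt0P => w; rewrite !inE => /andP [/andP [eaw _] /andP [ebw _]].
  exact: (tri eab ebw eaw).
have cW : p + 2 <= #|~: J|.
  by move: (cardsC J); rewrite cJ; lia.
have [W' sW cW'] := sub_card _ _ cW.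
exact: (no_indep_p2 (indep_sub iW sW) cW').
Qed.

Lemma indepN v : indep (N v).
Proof.
move=> a b; rewrite !inE => ea eb; apply/negP => eab.
exact: (tri ea eab eb).
Qed.

Lemma degN v : #|N v| = p.
Proof. apply/eqP; rewrite eqn_leq (alpha (indepN v)) /=; exact: (md v). Qed.

Definition F v := [set x | (x != v) && ~~ e v x].
Definition c v x := #|N v :&: N x|.

Lemma cardF v : p + 2 <= #|F v|.
Proof.
have -> : F v = ~: (v |: N v).
  by apply/setP => x; rewrite !inE negb_or.
have := cardsC (v |: N v); rewrite cardsU1 inE irr degN /=; move=> H; move: nT; rewrite -H. lia.
Qed.

Lemma Pineq {v x y} : ~~ e v x -> ~~ e v y -> x != y ->
  p <= c v x + c v y + e x y.
Proof.
move=> nx ny nxy.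
have cS : #|x |: (y |: N v)| = p + 2.
  rewrite cardsU1 cardsU1 degN !inE (negbTE nx) (negbTE ny) (negbTE nxy) /=; lia.
have h := leq_trans (st _ cS) (P2 (x:=x) (y:=y) (indepN v)).
have h2 : #|N x :&: (x |: (y |: N v))| <= e x y + c v x.
  have sub : N x :&: (x |: (y |: N v)) \subset y |: (N v :&: N x).
    apply/subsetP => w; rewrite !inE => /andP [exw /or3P [/eqP wx|->|->]] //.
      by move: exw; rewrite wx irr.
    by rewrite exw orbT.
  case exy: (e x y).
    apply: leq_trans (subset_leq_card sub) _; rewrite cardsU1 /c; case: (y \notin _); lia.
  rewrite add0n; apply: subset_leq_card; apply/subsetP => w.
  move=> wS; have := subsetP sub w wS; move: wS.
  rewrite !inE => /andP [exw _] /orP [/eqP wy|//].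
  by move: exw; rewrite wy exy.
rewrite /c [in X in _ <= _ + X]setIC in h; rewrite /c in h2 *; lia.
Qed.

Lemma disj v {x y} : e x y -> c v x + c v y <= p.
Proof.
move=> exy; rewrite /c -(degN v) -cardsUI.
have -> : (N v :&: N x) :&: (N v :&: N y) = set0.
  apply/setP => w; rewrite !inE; apply/negP => /andP [/andP [_ ex] /andP [_ ey]].
  by apply: (tri exy ey); rewrite ex.
by rewrite cards0 addn0; apply: subset_leq_card; rewrite -setIUr subsetIl.
Qed.


Lemma not_odd : ~~ odd p.
Proof.
apply/negP => op.
have hp : p = (p./2 * 2).+1 by rewrite -[in LHS](odd_double_half p) op muln2.
have : 0 < #|T| by move: nT => h; lia.
case/card_gt0P => v _.
set P := [set x | p <= (c v x).*2].
have iM : indep (v |: (F v :&: P)).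
  move=> a b; rewrite !inE.
  case/orP => [/eqP ->|/andP [/andP [av nva] pa]];
    case/orP => [/eqP ->|/andP [/andP [bv nvb] pb]] //.
  - by rewrite irr.
  - by rewrite sym.
  apply/negP => eab; have := disj v eab; rewrite -!muln2 in pa pb; lia.
have := alpha iM; rewrite cardsU1 !inE irr eqxx /= => hM.
have hID := cardsID P (F v); have hF := cardF v.
have : 2 < #|F v :\: P| by lia.
case/card_gt2P => [x [y [z [[xL yL zL] [nxy nyz nzx]]]]].
have adj : forall a b, a \in F v :\: P -> b \in F v :\: P -> a != b -> e a b.
  move=> a b; rewrite !inE => /andP [pa /andP [_ nva]] /andP [pb /andP [_ nvb]] nab.
  case eab: (e a b) => //.
  have := Pineq nva nvb nab; rewrite eab -!ltnNge -!muln2 in pa pb *; lia.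
apply: (tri (adj x y xL yL nxy) (adj y z yL zL nyz)).
by apply: adj => //; rewrite eq_sym.
Qed.

Variable k : nat.
Hypothesis pk : p = k + k.

Lemma Kc {v x} : x \in F v -> k <= c v x.
Proof.
move=> xF; have := xF; rewrite inE => /andP [xv nvx].
rewrite leqNgt; apply/negP => hc.
have key : forall a b, a \in F v -> b \in F v -> a != x -> ~~ e x a -> e a b -> False.
  move=> a b; rewrite !inE => /andP [av nva] /andP [bv nvb] ax nxa eab.
  have h1 := Pineq nvx nva (ltac:(by rewrite eq_sym)); rewrite (negbTE nxa) in h1.
  have h2 := disj v eab.
  have bx : x != b by apply/eqP => xb; move: nxa; rewrite xb sym eab.
  have h3 := Pineq nvx nvb bx; have h4 := leq_b1 (e x b); lia.
have iI : indep (v |: (F v :\ x)).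
  move=> a b; rewrite !inE.
  case/orP => [/eqP ->|/andP [ax /andP [av nva]]];
    case/orP => [/eqP ->|/andP [bx /andP [bv nvb]]] //.
  - by rewrite irr.
  - by rewrite sym.
  apply/negP => eab.
  have aF : a \in F v by rewrite inE av nva.
  have bF : b \in F v by rewrite inE bv nvb.
  case exa: (e x a); last by apply: (key a b) => //; rewrite exa.
  case exb: (e x b); last by apply: (key b a) => //; rewrite ?exb // sym.
  exact: (tri exa eab exb).
have := alpha iI; rewrite cardsU1 !inE eqxx /= => h.
have := cardsD1 x (F v); have := cardF v; rewrite xF; lia.
Qed.

Lemma TW {v x} : x \in F v -> k < c v x -> N x = N v.
Proof.
move=> xF hc; apply/eqP; rewrite eqEcard !degN leqnn andbT.
apply/subsetP => u; rewrite !inE => exu.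
case evu: (e v u) => //; exfalso.
have uF : u \in F v.
  rewrite inE evu andbT; apply/eqP => uv.
  by move: xF; rewrite inE -uv sym exu andbF.
have := disj v exu; have := Kc uF; lia.
Qed.

Lemma EK {v x y} : x \in F v -> y \in F v -> e x y -> c v x = k.
Proof. by move=> xF yF exy; have := disj v exy; have := Kc xF; have := Kc yF; lia. Qed.

Lemma L1 {v x y x'} : x \in F v -> y \in F v -> x' \in F v -> e x y -> e y x' ->
  x != x' -> N x = N x'.
Proof.
move=> xF yF x'F exy eyx' nxx'.
have ex'y : e x' y by rewrite sym.
have cx := EK xF yF exy.
have cy := EK yF xF (ltac:(by rewrite sym)).
have cx' := EK x'F yF ex'y.
set C := N v :\: N y.
have cC : #|C| = k by rewrite cardsD degN; move: cy; rewrite /c; lia.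
have AC : forall z, e z y -> c v z = k -> N v :&: N z = C.
  move=> z ezy cz; apply/eqP; rewrite eqEcard cC; move: cz; rewrite /c => ->.
  rewrite leqnn andbT; apply/subsetP => w; rewrite !inE => /andP [evw ezw].
  rewrite evw andbT; apply/negP => eyw; exact: (tri ezy eyw ezw).
have E : N v :&: N x = N v :&: N x' by rewrite (AC x) // (AC x').
have x'Fx : x' \in F x.
  rewrite inE eq_sym nxx' /=; apply/negP => exx'; exact: (tri exy eyx' exx').
have yv : y \notin N v :&: N x by move: yF; rewrite !inE negb_and => /andP [_ ->].
have sub : y |: (N v :&: N x) \subset N x :&: N x'.
  apply/subsetP => w; rewrite in_setU1 => /orP [/eqP ->|wA].
    by rewrite !inE exy ex'y.
  move: (wA); rewrite E !inE => /andP [_ ->]; move: wA; rewrite !inE => /andP [_ ->].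
  done.
have := subset_leq_card sub; rewrite cardsU1 yv -/(c v x) -/(c x x') => h.
by symmetry; apply: (TW x'Fx); lia.
Qed.

Lemma twin a a' w : N a = N a' -> e a w = e a' w.
Proof. by move=> h; have := congr1 (fun S : {set T} => w \in S) h; rewrite !inE. Qed.

Lemma neq_of {a b w} : e a w -> ~~ e b w -> a != b.
Proof. by move=> h1 h2; apply/eqP => ab; move: h2; rewrite -ab h1. Qed.

Lemma mF v z : z != v -> ~~ e v z -> z \in F v.
Proof. by move=> h1 h2; rewrite inE h1 h2. Qed.

Lemma COV {b0 b1 b2 b3 b4} : e b0 b1 -> e b1 b2 -> e b2 b3 -> e b3 b4 -> e b4 b0 ->
  ~~ e b0 b2 -> ~~ e b0 b3 -> ~~ e b1 b3 -> ~~ e b1 b4 -> ~~ e b2 b4 ->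
  forall t, e b0 t -> N t = N b1 \/ N t = N b4.
Proof.
move=> e01 e12 e23 e34 e40 n02 n03 n13 n14 n24 t e0t.
case: (eqVneq t b1) => [->|t1]; first by left.
case: (eqVneq t b4) => [->|t4]; first by right.
have n20 : ~~ e b2 b0 by rewrite sym.
have n30 : ~~ e b3 b0 by rewrite sym.
have n31 : ~~ e b3 b1 by rewrite sym.
have e04 : e b0 b4 by rewrite sym.
have e10 : e b1 b0 by rewrite sym.
have et0 : e t b0 by rewrite sym.
case et3: (e t b3).
  right; symmetry; apply: (L1 (v:=b2) (y:=b0)) => //.
  - by apply: mF => //; exact: (neq_of (w:=b0)).
  - by apply: mF => //; exact: (neq_of (w:=b4)).
  - apply: mF; first exact: (neq_of (w:=b0)).
    apply/negP => e2t; apply: (tri e23 _ e2t); by rewrite sym.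
  - by rewrite eq_sym.
left; symmetry; apply: (L1 (v:=b3) (y:=b0)) => //.
- by apply: mF => //; exact: (neq_of (w:=b0)).
- by apply: mF => //; exact: (neq_of (w:=b1)).
- apply: mF; first exact: (neq_of (w:=b0)).
  by rewrite sym et3.
- by rewrite eq_sym.
Qed.

Lemma ALL {b0 b1 b2 b3 b4} : e b0 b1 -> e b1 b2 -> e b2 b3 -> e b3 b4 -> e b4 b0 ->
  ~~ e b0 b2 -> ~~ e b0 b3 -> ~~ e b1 b3 -> ~~ e b1 b4 -> ~~ e b2 b4 ->
  forall t, N t = N b0 \/ N t = N b1 \/ N t = N b2 \/ N t = N b3 \/ N t = N b4.
Proof.
move=> e01 e12 e23 e34 e40 n02 n03 n13 n14 n24 t.
have n20 : ~~ e b2 b0 by rewrite sym.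
have n30 : ~~ e b3 b0 by rewrite sym.
have n41 : ~~ e b4 b1 by rewrite sym.
have n42 : ~~ e b4 b2 by rewrite sym.
have C0 := COV e01 e12 e23 e34 e40 n02 n03 n13 n14 n24.
have C1 := COV e12 e23 e34 e40 e01 n13 n14 n24 n20 n30.
have C4 := COV e40 e01 e12 e23 e34 n41 n42 n02 n03 n13.
case e0t: (e b0 t).
  by case: (C0 t e0t) => ->; [do 1!right; left | do 4!right].
case: (eqVneq t b0) => [->|tb0]; first by left.
have tF : t \in F b0 by rewrite inE tb0 e0t.
have := Kc tF => hk.
have : 0 < c b0 t by apply: leq_trans hk; move: p2; rewrite pk; case: (k).
case/card_gt0P => s; rewrite !inE => /andP [e0s ets].
case: (C0 s e0s) => hs.
  have e1t : e b1 t by rewrite -(twin _ _ _ hs) sym.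
  by case: (C1 t e1t) => ->; [do 2!right; left | left].
have e4t : e b4 t by rewrite -(twin _ _ _ hs) sym.
by case: (C4 t e4t) => ->; [left | do 3!right; left].
Qed.

Lemma final : 6 <= p /\ isomorphic e (blowup C5 k).
Proof.
have : 0 < #|T| by move: nT => h; lia.
case/card_gt0P => v0 _.
set I := v0 |: F v0.
case: (boolP [exists a, exists b, [&& a \in I, b \in I & e a b]]); last first.
  move/existsPn => H; exfalso.
  have iI : indep I.
    move=> a b aI bI; have := H a; move/existsPn/(_ b); by rewrite aI bI.
  have := alpha iI; have := cardF v0; rewrite /I cardsU1 inE eqxx /= => h1 h2.
  move: h1 h2; clear; lia.
case/existsP => x /existsP [y /and3P [xI yI exy]].
have inF : forall z w, z \in I -> w \in I -> e z w -> z \in F v0.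
  move=> z w; rewrite /I in_setU1 => /orP [/eqP zv|//] wI ezw.
  move: wI; rewrite in_setU1 => /orP [/eqP wv|]; first by move: ezw; rewrite zv wv irr.
  by rewrite inE -zv ezw andbF.
have xF := inF x y xI yI exy.
have yF := inF y x yI xI (ltac:(by rewrite sym)).
have k0 : 0 < k by move: p2; rewrite pk; case: (k).
have [a1 ha1] : exists a1, e v0 a1 && e x a1.
  have := leq_trans k0 (Kc xF); case/card_gt0P => a; rewrite !inE => h; by exists a.
have [a4 ha4] : exists a4, e v0 a4 && e y a4.
  have := leq_trans k0 (Kc yF); case/card_gt0P => a; rewrite !inE => h; by exists a.
case/andP: ha1 => e01 ex1; case/andP: ha4 => e04 ey4.
have e12 : e a1 x by rewrite sym.
have e40 : e a4 v0 by rewrite sym.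
have n02 : ~~ e v0 x by move: xF; rewrite inE => /andP [].
have n03 : ~~ e v0 y by move: yF; rewrite inE => /andP [].
have n13 : ~~ e a1 y by apply/negP => h; exact: (tri e12 exy h).
have n14 : ~~ e a1 a4 by apply/negP => h; exact: (tri e01 h e04).
have n24 : ~~ e x a4 by apply/negP => h; exact: (tri exy ey4 h).
pose b (i : 'I_5) := nth v0 [:: v0; a1; x; y; a4] i.
pose cls t := odflt ord0 [pick i | N t == N (b i)].
have clsP : forall t, N t = N (b (cls t)).
  move=> t; rewrite /cls; case: pickP => [i /eqP //|H]; exfalso.
  case: (ALL e01 e12 exy ey4 e40 n02 n03 n13 n14 n24 t) => [h|[h|[h|[h|h]]]].
  - by move: (H (@Ordinal 5 0 isT)); rewrite h /= eqxx.
  - by move: (H (@Ordinal 5 1 isT)); rewrite h /= eqxx.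
  - by move: (H (@Ordinal 5 2 isT)); rewrite h /= eqxx.
  - by move: (H (@Ordinal 5 3 isT)); rewrite h /= eqxx.
  - by move: (H (@Ordinal 5 4 isT)); rewrite h /= eqxx.
have bC5 : forall i j, e (b i) (b j) = C5 i j.
  have R := (e01, e12, exy, ey4, e40, negbTE n02, negbTE n03, negbTE n13, negbTE n14, negbTE n24).
  case=> [[|[|[|[|[|i]]]]] Hi] //; case=> [[|[|[|[|[|j]]]]] Hj] //; rewrite /C5 /b /=;
    first [by rewrite irr | by rewrite R | by rewrite sym R].
have clsE : forall u w, e u w = C5 (cls u) (cls w).
  move=> u w; rewrite (twin _ _ _ (clsP u)) sym (twin _ _ _ (clsP w)) sym.
  exact: bC5.
have C5s : forall i j, C5 i j = C5 j i by move=> i j; rewrite /C5 orbC.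
pose Bs (i : 'I_5) := [set t | cls t == i].
have sz : forall i j1 j2, j1 != j2 -> (forall j, C5 i j = (j == j1) || (j == j2)) ->
    #|Bs j1| + #|Bs j2| = p.
  move=> i j1 j2 nj hj.
  have E : Bs j1 :|: Bs j2 = N (b i).
    apply/setP => t; rewrite !inE -hj -bC5.
    by rewrite [RHS]sym (twin _ _ _ (clsP t)) sym.
  rewrite -(degN (b i)) -E cardsU.
  have -> : Bs j1 :&: Bs j2 = set0.
    apply/setP => t; rewrite !inE; apply/negP => /andP [/eqP h1 /eqP h2].
    by move: nj; rewrite -h1 -h2 eqxx.
  by rewrite cards0 subn0.
pose o0 := @Ordinal 5 0 isT. pose o1 := @Ordinal 5 1 isT. pose o2 := @Ordinal 5 2 isT.
pose o3 := @Ordinal 5 3 isT. pose o4 := @Ordinal 5 4 isT.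
have s0 := sz o0 o1 o4 isT (ltac:(by case=> [[|[|[|[|[|?]]]]] ?])).
have s1 := sz o1 o0 o2 isT (ltac:(by case=> [[|[|[|[|[|?]]]]] ?])).
have s2 := sz o2 o1 o3 isT (ltac:(by case=> [[|[|[|[|[|?]]]]] ?])).
have s3 := sz o3 o2 o4 isT (ltac:(by case=> [[|[|[|[|[|?]]]]] ?])).
have s4 := sz o4 o0 o3 isT (ltac:(by case=> [[|[|[|[|[|?]]]]] ?])).
rewrite pk in s0 s1 s2 s3 s4.
have [h0 h1 h2 h3 h4] := solve5 _ _ _ _ _ _ s0 s1 s2 s3 s4.
have Bsk : forall i, #|Bs i| = k.
  by case=> [[|[|[|[|[|m]]]]] Hm].
pose idx t := index t (enum (Bs (cls t))).
have idxlt : forall t, idx t < k.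
  by move=> t; rewrite -(Bsk (cls t)) cardE index_mem mem_enum inE eqxx.
pose f t := (cls t, Ordinal (idxlt t)).
pose h (ij : 'I_5 * 'I_k) := nth v0 (enum (Bs ij.1)) ij.2.
have fbij : bijective f.
  exists h.
    by move=> t; rewrite /h /f /= nth_index // mem_enum inE.
  case=> i j; set t := h (i, j).
  have tB : t \in Bs i.
    by rewrite /t /h /= -mem_enum mem_nth // -cardE Bsk.
  have ct : cls t = i by move: tB; rewrite inE => /eqP.
  apply/eqP; rewrite /f xpair_eqE; apply/andP; split; apply/eqP => //.
  apply: val_inj => /=; rewrite /idx ct /t /h /= index_uniq // ?enum_uniq //.
  by rewrite -cardE Bsk.
have cT : #|T| = 5 * k by rewrite (bij_eq_card fbij) card_prod !card_ord.
split.
  move: nT; rewrite cT pk; clear; lia.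
by exists f; split => // u w; rewrite /blowup /= clsE.
Qed.

End G.


Theorem lemma5 (p : nat) (T : finType) (e : rel T) :
  2 <= p ->
  simple_graph e ->
  st_graph e (p + 2) p ->
  min_degree_ge e p ->
  2 * p + 3 <= #|T| ->
  (triangle_free e <->
   [/\ ~~ odd p, 6 <= p & isomorphic e (blowup C5 p./2)]).
Proof.
move=> p2 [irr sym] st md nT; split.
  move=> tf.
  have ne := @not_odd T e p irr sym st md nT tf p2.
  have pk : p = p./2 + p./2.
    by rewrite addnn; move: (odd_double_half p); rewrite (negbTE ne) add0n => ->.
  have [h6 hiso] := @final T e p irr sym st md nT tf p2 _ pk.
  by split.
case=> _ _ [f [_ hf]] x y z.
rewrite !hf /blowup.
by apply/negP; apply: C5tf.
Qed.
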